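(* Let $M$ be an $R$-module. (a) If $M$ is a Hopfian comultiplication $R$-module satisfying the dual of Property $\mathcal{A}$, then $M$ satisfies Property $\mathcal{A}$. (b) If $M$ is a co-Hopfian multiplication $R$-module satisfying Property $\mathcal{A}$, then $M$ satisfies the dual of Property $\mathcal{A}$.
   Context: All rings are commutative with identity. For an $R$-module $M$, $W_R(M)=\{r\in R : rM\neq M\}$ and $Z_R(M)=\{r\in R: rm=0 \text{ for some } 0\neq m\in M\}$. An $R$-module $M$ satisfies the dual of Property $\mathcal{A}$ if for every finitely generated ideal $I$ of $R$ with $I\subseteq W_R(M)$ we have $IM\neq M$. $M$ satisfies Property $\mathcal{A}$ if for every finitely generated ideal $I$ of $R$ with $I\subseteq Z_R(M)$ we have $(0:_M I)\neq 0$. $M$ is Hopfian (resp. co-Hopfian) if every surjective (resp. injective) endomorphism of $M$ is an isomorphism. $M$ is a multiplication module if every submodule $N$ equals $IM$ for some ideal $I$; $M$ is a comultiplication module if every submodule $N$ equals $(0:_M I)$ for some ideal $I$ of $R$. *)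

(* Defs.v *)
From HB Require Import structures.
From mathcomp Require Import all_boot all_order all_algebra.
Set Implicit Arguments. Unset Strict Implicit. Unset Printing Implicit Defensive.
Import GRing.Theory.
Local Open Scope ring_scope.

Section ModuleDefs.
Variables (R : comPzRingType) (M : lmodType R).

Definition is_ideal (I : R -> Prop) : Prop :=
  [/\ I 0, (forall x y, I x -> I y -> I (x + y)) & (forall r x, I x -> I (r * x))].

Definition is_submodule (N : M -> Prop) : Prop :=
  [/\ N 0, (forall x y, N x -> N y -> N (x + y)) & (forall r x, N x -> N (r *: x))].

Definition fg_ideal (I : R -> Prop) : Prop :=
  exists s : seq R, forall x,
    I x <-> exists c : 'I_(size s) -> R, x = \sum_(i < size s) c i * s`_i.

Definition ideal_mod (I : R -> Prop) : M -> Prop :=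
  fun x => exists n (r : 'I_n -> R) (m : 'I_n -> M),
    (forall i, I (r i)) /\ x = \sum_(i < n) r i *: m i.

Definition annM (I : R -> Prop) : M -> Prop :=
  fun x => forall r, I r -> r *: x = 0.

Definition W_set : R -> Prop := fun r => ~ (forall x : M, exists m, x = r *: m).

Definition Z_set : R -> Prop := fun r => exists m : M, m <> 0 /\ r *: m = 0.

Definition propA : Prop :=
  forall I, fg_ideal I -> (forall r, I r -> Z_set r) ->
    exists m : M, m <> 0 /\ annM I m.

Definition dual_propA : Prop :=
  forall I, fg_ideal I -> (forall r, I r -> W_set r) ->
    ~ (forall x : M, ideal_mod I x).

Definition hopfian : Prop :=
  forall f : {linear M -> M}, (forall y, exists x, f x = y) -> bijective f.

Definition cohopfian : Prop :=
  forall f : {linear M -> M}, injective f -> bijective f.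

Definition multiplication_module : Prop :=
  forall N : M -> Prop, is_submodule N ->
    exists I, is_ideal I /\ forall x, N x <-> ideal_mod I x.

Definition comultiplication_module : Prop :=
  forall N : M -> Prop, is_submodule N ->
    exists I, is_ideal I /\ forall x, N x <-> annM I x.

End ModuleDefs.

(* Main.v *)
Require Import Defs.
From HB Require Import structures.
From mathcomp Require Import all_boot all_order all_algebra.
From Stdlib Require Import Classical.
Set Implicit Arguments. Unset Strict Implicit. Unset Printing Implicit Defensive.
Import GRing.Theory.
Local Open Scope ring_scope.

Section Sc.
Variables (R : comPzRingType) (M : lmodType R) (a : R).
Definition scm (x : M) : M := a *: x.
Fact scm_lin : linear scm.
Proof. by move=> k x y; rewrite /scm scalerDr !scalerA mulrC. Qed.
HB.instance Definition _ := GRing.isLinear.Build R M M *:%R scm scm_lin.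
End Sc.

Section Aux.
Variables (R : comPzRingType) (M : lmodType R).

Lemma hop_WZ : hopfian M -> forall r, Z_set M r -> W_set M r.
Proof.
move=> H r [m [m0 rm]] Hs.
have /H /bij_inj inj : forall y, exists x, @scm R M r x = y.
  by move=> y; case: (Hs y) => x ->; exists x.
apply: m0; apply: inj; rewrite /= /scm rm; exact/esym/scaler0.
Qed.

Lemma cohop_WZ : cohopfian M -> forall r, W_set M r -> Z_set M r.
Proof.
move=> H r Hw; apply: NNPP => Hz; apply: Hw.
have inj : injective (@scm R M r).
  move=> a b; rewrite /scm => e; apply: NNPP => ne; apply: Hz.
  exists (a - b); split; first by move/eqP; rewrite subr_eq0 => /eqP.
  by rewrite scalerBr e subrr.
case: (H _ inj) => g gf fg x; exists (g x); by rewrite -[RHS]/(@scm R M r (g x)) fg.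
Qed.

Lemma fg_mul (I : R -> Prop) : fg_ideal I -> forall r x, I x -> I (r * x).
Proof.
case=> s Hs r x /Hs [c ->]; apply/Hs; exists (fun i => r * c i).
by rewrite mulr_sumr; apply: eq_bigr => i _; rewrite mulrA.
Qed.

Lemma ideal_mod_sub (I : R -> Prop) : fg_ideal I -> is_submodule (@ideal_mod R M I).
Proof.
move=> fgI; split.
- by exists 0%N, (fun _ => 0), (fun _ => 0); split; [case | rewrite big_ord0].
- move=> x y [n1 [r1 [m1 [H1 ->]]]] [n2 [r2 [m2 [H2 ->]]]].
  exists (n1 + n2)%N,
    (fun i => match split i with inl j => r1 j | inr k => r2 k end),
    (fun i => match split i with inl j => m1 j | inr k => m2 k end).
  split; first by move=> i; case: (split i).
  rewrite big_split_ord /=; congr (_ + _); apply: eq_bigr => i _.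
    by rewrite -[lshift _ _]/(unsplit (inl i)) unsplitK.
  by rewrite -[rshift _ _]/(unsplit (inr i)) unsplitK.
- move=> r x [n [rr [m [H ->]]]]; exists n, (fun i => r * rr i), m; split.
    by move=> i; apply: fg_mul.
  by rewrite scaler_sumr; apply: eq_bigr => i _; rewrite scalerA.
Qed.

Lemma ideal_mod1 (I : R -> Prop) r (x : M) : I r -> @ideal_mod R M I (r *: x).
Proof.
move=> Ir; exists 1%N, (fun _ => r), (fun _ => x); split => //.
by rewrite big_ord1.
Qed.

End Aux.

Theorem proposition2p8 (R : comPzRingType) (M : lmodType R) :
  (hopfian M -> comultiplication_module M -> dual_propA M -> propA M) /\
  (cohopfian M -> multiplication_module M -> propA M -> dual_propA M).
Proof.
split.
- move=> hop com dA I fgI IZ; apply: NNPP => Hn.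
  have ann0 : forall m, @annM R M I m -> m = 0.
    by move=> m Hm; apply: NNPP => m0; apply: Hn; exists m.
  apply: (dA I fgI); first by move=> r /IZ; apply: hop_WZ.
  have [J [_ HJ]] := com _ (@ideal_mod_sub R M _ fgI).
  move=> x; apply/HJ => j Jj; apply: ann0 => i Ii.
  rewrite scalerA mulrC -scalerA.
  by have /HJ := ideal_mod1 (M:=M) x Ii; apply.
- move=> coh mul pA I fgI IW IM.
  have [m [m0 Im]] := pA I fgI (fun r Ir => cohop_WZ coh (IW r Ir)).
  have subN : is_submodule (fun x : M => exists c, x = c *: m).
    split; first by exists 0; rewrite scale0r.
    + by move=> x y [c ->] [d ->]; exists (c + d); rewrite scalerDl.
    + by move=> r x [c ->]; exists (r * c); rewrite scalerA.
  have [J [_ HJ]] := mul _ subN.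
  apply: m0.
  have : @ideal_mod R M J m by apply/HJ; exists 1; rewrite scale1r.
  case=> n [rr [mm [Hr ->]]]; apply: big1 => k _.
  case: (IM (mm k)) => n2 [r2 [m2 [H2 ->]]].
  rewrite scaler_sumr; apply: big1 => l _.
  rewrite scalerA mulrC -scalerA.
  have /HJ [c ->] := ideal_mod1 (M:=M) (m2 l) (Hr k).
  by rewrite scalerA mulrC -scalerA (Im _ (H2 l)) scaler0.
Qed.
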